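(* With $\alpha_f(\sigma):=\sup_{\omega\in\mathbb{R}} f(\sigma+j\omega)$ for $\sigma>\alpha_0$, one has $\lim_{\sigma\to\alpha_0^+}\alpha_f(\sigma)=+\infty$ and $\lim_{\sigma\to+\infty}\alpha_f(\sigma)=0$.
   Context: Fix integers $n\ge 1$, $m\ge 0$, matrices $A_0,\dots,A_m\in\mathbb{C}^{n\times n}$, delays $\tau_0=0$ and $\tau_1,\dots,\tau_m\ge 0$, and weights $w_0,\dots,w_m>0$. Define the matrix function $F(\lambda)=\lambda I_n-\sum_{i=0}^m A_i e^{-\lambda\tau_i}$ for $\lambda\in\mathbb{C}$. The characteristic roots are the solutions of $\det F(\lambda)=0$; this set is nonempty, and every right half-plane $\{\Re\lambda\ge c\}$ contains only finitely many of them, so the spectral abscissa $\alpha_0=\sup\{\Re\lambda:\det F(\lambda)=0\}$ is a finite real number attained by some root. Define $w(\lambda)=\sum_{i=0}^m |e^{-\lambda\tau_i}|/w_i$ and, for $\lambda$ not a characteristic root, $f(\lambda)=w(\lambda)\,\sigma_{\max}(F(\lambda)^{-1})$, where $\sigma_{\max}$ denotes the largest singular value. *)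

(* Defs.v *)
From HB Require Import structures.
From Stdlib Require Import Reals Lra ClassicalEpsilon FunctionalExtensionality.
From mathcomp Require Import all_boot all_order all_algebra.

Set Implicit Arguments.
Unset Strict Implicit.
Unset Printing Implicit Defensive.

(* MathComp matrices over a hand-built complex field whose real and
   imaginary parts are Stdlib reals (needed for exp, sqrt, sup). *)

Local Open Scope R_scope.
Record cpx := Cpx { Re : R; Im : R }.

Lemma cpx_ext (a b : cpx) : Re a = Re b -> Im a = Im b -> a = b.
Proof. by case: a => ? ?; case: b => ? ? /= -> ->. Qed.

Definition cpx_eqb (a b : cpx) : bool :=
  if Req_EM_T (Re a) (Re b) then
    (if Req_EM_T (Im a) (Im b) then true else false) else false.

Lemma cpx_eqP : Equality.axiom cpx_eqb.
Proof.
move=> a b; rewrite /cpx_eqb.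
case: (Req_EM_T _ _) => h1; last by constructor => e; apply: h1; rewrite e.
case: (Req_EM_T _ _) => h2; last by constructor => e; apply: h2; rewrite e.
by constructor; apply: cpx_ext.
Qed.

HB.instance Definition _ := hasDecEq.Build cpx cpx_eqP.

Definition cfind (T : Type) (P : pred T) (n : nat) : option T :=
  match excluded_middle_informative (exists x, P x) with
  | left h => Some (proj1_sig (constructive_indefinite_description _ h))
  | right _ => None
  end.

Lemma cfind_correct (T : Type) (P : pred T) n x : cfind P n = Some x -> P x.
Proof.
rewrite /cfind; case: excluded_middle_informative => // h [<-].
exact: proj2_sig (constructive_indefinite_description _ h).
Qed.

Lemma cfind_complete (T : Type) (P : pred T) :
  (exists x, P x) -> exists n, cfind P n.
Proof. by move=> h; exists 0%N; rewrite /cfind; case: excluded_middle_informative. Qed.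

Lemma cfind_ext (T : Type) (P Q : pred T) : P =1 Q -> cfind P =1 cfind Q.
Proof. by move=> h; have -> : P = Q by apply: functional_extensionality. Qed.

HB.instance Definition _ := hasChoice.Build cpx
  (@cfind_correct cpx) (@cfind_complete cpx) (@cfind_ext cpx).

Definition czero : cpx := Cpx 0 0.
Definition cone : cpx := Cpx 1 0.
Definition cadd (a b : cpx) : cpx := Cpx (Re a + Re b) (Im a + Im b).
Definition copp (a : cpx) : cpx := Cpx (- Re a) (- Im a).
Definition cmul (a b : cpx) : cpx :=
  Cpx (Re a * Re b - Im a * Im b) (Re a * Im b + Im a * Re b).
Definition cinv (a : cpx) : cpx :=
  let d := Re a * Re a + Im a * Im a in Cpx (Rdiv (Re a) d) (Rdiv (- Im a) d).

Lemma caddA : associative cadd.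
Proof. by move=> a b c; apply: cpx_ext => /=; ring. Qed.
Lemma caddC : commutative cadd.
Proof. by move=> a b; apply: cpx_ext => /=; ring. Qed.
Lemma cadd0 : left_id czero cadd.
Proof. by move=> a; apply: cpx_ext => /=; ring. Qed.
Lemma caddN : left_inverse czero copp cadd.
Proof. by move=> a; apply: cpx_ext => /=; ring. Qed.

HB.instance Definition _ := GRing.isZmodule.Build cpx caddA caddC cadd0 caddN.

Lemma cmulA : associative cmul.
Proof. by move=> a b c; apply: cpx_ext => /=; ring. Qed.
Lemma cmulC : commutative cmul.
Proof. by move=> a b; apply: cpx_ext => /=; ring. Qed.
Lemma cmul1 : left_id cone cmul.
Proof. by move=> a; apply: cpx_ext => /=; ring. Qed.
Lemma cmulDl : left_distributive cmul cadd.
Proof. by move=> a b c; apply: cpx_ext => /=; ring. Qed.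
Lemma cone_neq0 : cone != czero.
Proof. by apply/eqP => -[]; lra. Qed.

HB.instance Definition _ :=
  GRing.Zmodule_isComNzRing.Build cpx cmulA cmulC cmul1 cmulDl cone_neq0.

Lemma cmulV (x : cpx) : x != 0%R -> cmul (cinv x) x = 1%R.
Proof.
move=> /eqP nz; case: x nz => a b nz.
have hd : a * a + b * b <> 0.
  move=> h; apply: nz; apply: cpx_ext => /=; nra.
by apply: cpx_ext => /=; field.
Qed.
Lemma cinv0 : cinv 0%R = 0%R.
Proof. by apply: cpx_ext => /=; rewrite /Rdiv; ring. Qed.

HB.instance Definition _ := GRing.ComNzRing_isField.Build cpx cmulV cinv0.

Definition RtoC (x : R) : cpx := Cpx x 0.
Definition jC : cpx := Cpx 0 1.
Definition Cexp (z : cpx) : cpx := Cpx (exp (Re z) * cos (Im z)) (exp (Re z) * sin (Im z)).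
Definition Cmod (z : cpx) : R := sqrt (Re z * Re z + Im z * Im z).

Local Close Scope R_scope.
Local Open Scope ring_scope.

Definition vnorm (n : nat) (x : 'cV[cpx]_n) : R :=
  sqrt (\big[Rplus/R0]_(i < n) Rmult (Cmod (x i ord0)) (Cmod (x i ord0))).

(* largest singular value = induced Euclidean (spectral) norm:
   sup { |M x| : |x| = 1 } *)
Definition sigma_max (n : nat) (M : 'M[cpx]_n) : R :=
  epsilon (inhabits R0)
    (is_lub (fun y => exists x : 'cV[cpx]_n, vnorm x = R1 /\ y = vnorm (M *m x))).

Definition Fmat (n m : nat) (A : 'I_m.+1 -> 'M[cpx]_n) (tau : 'I_m.+1 -> R)
  (lam : cpx) : 'M[cpx]_n :=
  lam%:M - \sum_(i < m.+1) Cexp (- (lam * RtoC (tau i))) *: A i.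

Definition char_root (n m : nat) (A : 'I_m.+1 -> 'M[cpx]_n) (tau : 'I_m.+1 -> R)
  (lam : cpx) : Prop := \det (Fmat A tau lam) = 0.

Definition wfun (m : nat) (tau : 'I_m.+1 -> R) (w : 'I_m.+1 -> R) (lam : cpx) : R :=
  \big[Rplus/R0]_(i < m.+1) Rdiv (Cmod (Cexp (- (lam * RtoC (tau i))))) (w i).

Definition ffun (n m : nat) (A : 'I_m.+1 -> 'M[cpx]_n) (tau w : 'I_m.+1 -> R)
  (lam : cpx) : R :=
  Rmult (wfun tau w lam) (sigma_max (invmx (Fmat A tau lam))).

Definition sjw (s om : R) : cpx := Cpx s om.

(* the set { f(sigma + j omega) : omega in R }, whose sup is alpha_f(sigma) *)
Definition fvals (n m : nat) (A : 'I_m.+1 -> 'M[cpx]_n) (tau w : 'I_m.+1 -> R)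
  (s : R) : R -> Prop :=
  fun y => exists om : R, y = ffun A tau w (sjw s om).

(* the set { Re lambda : det F(lambda) = 0 }, whose sup is alpha_0 *)
Definition root_re (n m : nat) (A : 'I_m.+1 -> 'M[cpx]_n) (tau : 'I_m.+1 -> R) :
  R -> Prop :=
  fun x => exists lam : cpx, char_root A tau lam /\ x = Re lam.

(* Main.v *)
Require Import Defs.
From HB Require Import structures.
From Stdlib Require Import Reals Lra Psatz ClassicalEpsilon Classical.
From mathcomp Require Import all_boot all_order all_algebra.
Set Implicit Arguments. Unset Strict Implicit. Unset Printing Implicit Defensive.
Import GRing.Theory.
Local Open Scope R_scope.

HB.instance Definition _ := Monoid.isComLaw.Build R R0 Rplus (fun a b c => esym (Rplus_assoc a b c)) Rplus_comm Rplus_0_l.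

Lemma Rsum_le (I : Type) (r : seq I) (P : pred I) (F G : I -> R) :
  (forall i, P i -> F i <= G i) ->
  \big[Rplus/R0]_(i <- r | P i) F i <= \big[Rplus/R0]_(i <- r | P i) G i.
Proof. move=> h; elim/big_rec2: _ => [|i x y Pi hxy]; [lra| have := h i Pi; lra]. Qed.

Lemma Rsum_ge0 (I : Type) (r : seq I) (P : pred I) (F : I -> R) :
  (forall i, P i -> 0 <= F i) -> 0 <= \big[Rplus/R0]_(i <- r | P i) F i.
Proof. move=> h; elim/big_rec: _ => [|i x Pi hx]; [lra| have := h i Pi; lra]. Qed.

Lemma Rsum_term (I : finType) (F : I -> R) (j : I) :
  (forall i, 0 <= F i) -> F j <= \big[Rplus/R0]_(i : I) F i.
Proof.
move=> h; rewrite (bigD1 j) //=.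
have := @Rsum_ge0 I (index_enum I) (fun i => i != j) F (fun i _ => h i); lra.
Qed.

Lemma Rsum_mull (I : Type) (r : seq I) (P : pred I) (F : I -> R) c :
  c * \big[Rplus/R0]_(i <- r | P i) F i = \big[Rplus/R0]_(i <- r | P i) (c * F i).
Proof. elim/big_rec2: _ => [|i x y Pi <-]; ring. Qed.

Lemma Rsum_const (n : nat) c : \big[Rplus/R0]_(i < n) c = INR n * c.
Proof.
elim: n => [|n IH]; first by rewrite big_ord0 /=; ring.
rewrite big_ord_recr /= IH; change (INR n * c + c = INR (S n) * c); rewrite S_INR; ring.
Qed.

Lemma Cmod_ge0 z : 0 <= Cmod z.
Proof. exact: sqrt_pos. Qed.

Lemma Cmod_sq z : Cmod z * Cmod z = Re z * Re z + Im z * Im z.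
Proof. rewrite /Cmod sqrt_sqrt //; nra. Qed.

Lemma Cmod_mul (a b : cpx) : Cmod (a * b)%R = Cmod a * Cmod b.
Proof.
rewrite /Cmod -sqrt_mult; try nra. congr sqrt. rewrite /GRing.mul /=. ring.
Qed.

Lemma Cmod_add (a b : cpx) : Cmod (a + b)%R <= Cmod a + Cmod b.
Proof.
apply: Rsqr_incr_0_var; last by have := Cmod_ge0 a; have := Cmod_ge0 b; lra.
rewrite /Rsqr.
have e1 := Cmod_sq (a + b)%R. have e2 := Cmod_sq a. have e3 := Cmod_sq b.
have h : Re a * Re b + Im a * Im b <= Cmod a * Cmod b.
  have g1 := Cmod_ge0 a; have g2 := Cmod_ge0 b.
  apply: Rsqr_incr_0_var; last nra.
  rewrite /Rsqr. have -> : Cmod a * Cmod b * (Cmod a * Cmod b) = (Cmod a * Cmod a) * (Cmod b * Cmod b) by ring.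
  rewrite e2 e3. have := Rle_0_sqr (Re a * Im b - Im a * Re b); rewrite /Rsqr; nra.
have ea : Re (a + b)%R = Re a + Re b by []. have eb : Im (a+b)%R = Im a + Im b by [].
rewrite e1 ea eb. nra.
Qed.

Lemma Cmod_opp (a : cpx) : Cmod (- a)%R = Cmod a.
Proof. rewrite /Cmod /=. congr sqrt. rewrite /GRing.opp /=. ring. Qed.

Lemma Cmod_sum (I : Type) (r : seq I) (P : pred I) (F : I -> cpx) :
  Cmod (\sum_(i <- r | P i) F i)%R <= \big[Rplus/R0]_(i <- r | P i) Cmod (F i).
Proof.
elim/big_rec2: _ => [|i x y Pi hxy].
  by rewrite /Cmod /= Rmult_0_l Rplus_0_l sqrt_0; lra.
have := Cmod_add (F i) x; lra.
Qed.

Lemma Cmod_Re z : Re z <= Cmod z.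
Proof.
have := Cmod_ge0 z; have := Cmod_sq z => h g.
case: (Rle_lt_dec (Re z) 0) => hr; first lra. nra.
Qed.

Lemma Cmod_RtoC x : Cmod (RtoC x) = Rabs x.
Proof. rewrite /Cmod /= Rmult_0_l Rplus_0_r. exact: sqrt_Rsqr_abs. Qed.

Lemma Cmod_Cexp z : Cmod (Cexp z) = exp (Re z).
Proof.
rewrite /Cmod /=.
have -> : exp (Re z) * cos (Im z) * (exp (Re z) * cos (Im z)) +
   exp (Re z) * sin (Im z) * (exp (Re z) * sin (Im z)) = exp (Re z) * exp (Re z) * (Rsqr (sin (Im z)) + Rsqr (cos (Im z))) by (rewrite /Rsqr; ring).
rewrite sin2_cos2 Rmult_1_r sqrt_square //. exact: Rlt_le (exp_pos _).
Qed.

Definition nsq (n : nat) (x : 'cV[cpx]_n) : R :=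
  \big[Rplus/R0]_(i < n) (Cmod (x i ord0) * Cmod (x i ord0)).

Lemma vnormE n (x : 'cV[cpx]_n) : vnorm x = sqrt (nsq x).
Proof. by []. Qed.

Lemma nsq_ge0 n (x : 'cV[cpx]_n) : 0 <= nsq x.
Proof. apply: Rsum_ge0 => i _; have := Cmod_ge0 (x i ord0); nra. Qed.

Lemma vnorm_ge0 n (x : 'cV[cpx]_n) : 0 <= vnorm x.
Proof. exact: sqrt_pos. Qed.

Lemma entry_le n (x : 'cV[cpx]_n) i : Cmod (x i ord0) <= vnorm x.
Proof.
rewrite vnormE -(sqrt_square (Cmod (x i ord0))); last exact: Cmod_ge0.
apply: sqrt_le_1_alt.
rewrite /nsq; apply: (@Rsum_term _ (fun i => Cmod (x i ord0) * Cmod (x i ord0)) i) => k.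
have := Cmod_ge0 (x k ord0); nra.
Qed.

Lemma sq_mul a b : a * b * (a * b) = a * a * (b * b).
Proof. ring. Qed.

Lemma nsq_scale n (x : 'cV[cpx]_n) c : nsq (c *: x)%R = Cmod c * Cmod c * nsq x.
Proof.
rewrite /nsq Rsum_mull; apply: eq_bigr => i _; rewrite !mxE Cmod_mul. exact: sq_mul.
Qed.

Lemma vnorm_scale n (x : 'cV[cpx]_n) c : vnorm (c *: x)%R = Cmod c * vnorm x.
Proof.
rewrite !vnormE nsq_scale sqrt_mult; first by rewrite sqrt_square //; exact: Cmod_ge0.
- have := Cmod_ge0 c; nra.
- exact: nsq_ge0.
Qed.

Lemma Cmod_eq0 (z : cpx) : Cmod z = 0 -> z = 0%R.
Proof.
move=> h; have := Cmod_sq z; rewrite h => e.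
apply: cpx_ext => /=; nra.
Qed.

Lemma Cmod_pos (z : cpx) : z != 0%R -> 0 < Cmod z.
Proof.
move=> /eqP nz; have := Cmod_ge0 z => g.
case: (Req_dec (Cmod z) 0) => e; last lra.
by case: nz; apply: Cmod_eq0.
Qed.

Lemma nsq_pos n (x : 'cV[cpx]_n) : x != 0%R -> 0 < nsq x.
Proof.
move=> nz.
have [i hi] : exists i, x i ord0 != 0%R.
  apply: NNPP => hn; move/eqP: nz; apply; apply/matrixP => i j.
  rewrite ord1 mxE; apply/eqP; apply/negPn/negP => h; apply: hn; by exists i.
have p := Cmod_pos hi.
have h := @Rsum_term _ (fun i => Cmod (x i ord0) * Cmod (x i ord0)) i.
rewrite /nsq; apply: Rlt_le_trans (h _); first nra.
move=> k; have := Cmod_ge0 (x k ord0); nra.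
Qed.

Lemma vnorm_pos n (x : 'cV[cpx]_n) : x != 0%R -> 0 < vnorm x.
Proof. move=> nz; rewrite vnormE; apply: sqrt_lt_R0; exact: nsq_pos. Qed.

Lemma normalize n (x : 'cV[cpx]_n) : x != 0%R ->
  vnorm (RtoC (/ vnorm x) *: x)%R = 1.
Proof.
move=> nz; have p := vnorm_pos nz.
rewrite vnorm_scale Cmod_RtoC Rabs_right; last by left; apply: Rinv_0_lt_compat.
by field; lra.
Qed.

Lemma unit_exists n : (0 < n)%N -> exists x : 'cV[cpx]_n, vnorm x = 1.
Proof.
move=> n0; exists (RtoC (/ vnorm (const_mx 1%R : 'cV[cpx]_n)) *: const_mx 1%R)%R.
apply: normalize; apply/eqP => /matrixP /(_ (Ordinal n0) ord0); rewrite !mxE.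
move/eqP; exact/negP/oner_neq0.
Qed.

Lemma mul_entry_bound n (M : 'M[cpx]_n) (x : 'cV[cpx]_n) b i :
  (forall j, Cmod (x j ord0) <= b) ->
  Cmod ((M *m x)%R i ord0) <= b * \big[Rplus/R0]_(j < n) Cmod (M i j).
Proof.
move=> h; rewrite mxE Rsum_mull.
apply: Rle_trans (Cmod_sum _ _ _) _; apply: Rsum_le => j _.
rewrite Cmod_mul Rmult_comm; apply: Rmult_le_compat_r; [exact: Cmod_ge0 | exact: h].
Qed.

Lemma nsq_bound n (x : 'cV[cpx]_n) c :
  (forall i, Cmod (x i ord0) <= c) -> nsq x <= INR n * (c * c).
Proof.
move=> h; rewrite -Rsum_const; apply: Rsum_le => i _.
have := h i; have := Cmod_ge0 (x i ord0); nra.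
Qed.

Lemma nsq_le_sum n (x : 'cV[cpx]_n) :
  nsq x <= (\big[Rplus/R0]_(i < n) Cmod (x i ord0)) * (\big[Rplus/R0]_(i < n) Cmod (x i ord0)).
Proof.
rewrite /nsq Rsum_mull; apply: Rsum_le => i _.
apply: Rmult_le_compat_r; first exact: Cmod_ge0.
exact: (@Rsum_term _ (fun i => Cmod (x i ord0)) i (fun k => Cmod_ge0 _)).
Qed.

Lemma vnorm_le_sum n (x : 'cV[cpx]_n) :
  vnorm x <= \big[Rplus/R0]_(i < n) Cmod (x i ord0).
Proof.
rewrite vnormE -(sqrt_square (\big[Rplus/R0]_(i < n) Cmod (x i ord0))).
  apply: sqrt_le_1_alt; exact: nsq_le_sum.
apply: Rsum_ge0 => i _; exact: Cmod_ge0.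
Qed.

Definition Sset n (M : 'M[cpx]_n) :=
  fun y => exists x : 'cV[cpx]_n, vnorm x = R1 /\ y = vnorm (M *m x)%R.

Lemma sig_lub n (M : 'M[cpx]_n) : (0 < n)%N -> is_lub (Sset M) (sigma_max M).
Proof.
move=> n0; rewrite /sigma_max; apply: epsilon_spec.
have [x hx] := unit_exists n0.
set T := \big[Rplus/R0]_(i < n) \big[Rplus/R0]_(j < n) Cmod (M i j).
have hb : bound (Sset M).
  exists (sqrt (INR n * (T * T))) => y [z [hz ->]].
  rewrite vnormE; apply: sqrt_le_1_alt; apply: nsq_bound => i.
  apply: Rle_trans (mul_entry_bound M (b := 1) i _) _.
    by move=> j; have := entry_le z j; rewrite hz; lra.
  rewrite Rmult_1_l.
  exact: (@Rsum_term _ (fun i => \big[Rplus/R0]_(j < n) Cmod (M i j)) i (fun k => Rsum_ge0 _ (fun j _ => Cmod_ge0 _))).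
have [l hl] := completeness (Sset M) hb (ex_intro _ _ (ex_intro _ x (conj hx erefl))).
by exists l.
Qed.

Lemma sig_ge n (M : 'M[cpx]_n) x : (0 < n)%N -> vnorm x = 1 -> vnorm (M *m x)%R <= sigma_max M.
Proof. move=> n0 hx; apply: (proj1 (sig_lub M n0)); by exists x. Qed.

Lemma sig_le n (M : 'M[cpx]_n) c : (0 < n)%N ->
  (forall x, vnorm x = 1 -> vnorm (M *m x)%R <= c) -> sigma_max M <= c.
Proof. move=> n0 h; apply: (proj2 (sig_lub M n0)) => y [x [hx ->]]; exact: h. Qed.

Lemma sig_ge0 n (M : 'M[cpx]_n) : (0 < n)%N -> 0 <= sigma_max M.
Proof.
move=> n0; have [x hx] := unit_exists n0.
apply: Rle_trans (sig_ge M n0 hx); exact: vnorm_ge0.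
Qed.

Definition cf (lam : cpx) (t : R) : cpx := Cexp (- (lam * RtoC t))%R.

Lemma cf_Re lam t : Re (- (lam * RtoC t))%R = - (Re lam * t).
Proof. rewrite /GRing.opp /GRing.mul /=; ring. Qed.
Lemma cf_Im lam t : Im (- (lam * RtoC t))%R = - (Im lam * t).
Proof. rewrite /GRing.opp /GRing.mul /=; ring. Qed.

Lemma Cmod_cf lam t : Cmod (cf lam t) = exp (- (Re lam * t)).
Proof. by rewrite /cf Cmod_Cexp cf_Re. Qed.

Lemma exp_le x y : x <= y -> exp x <= exp y.
Proof. case=> [h|->]; [left; exact: exp_increasing | lra]. Qed.

Lemma Fmat_mulE n m (A : 'I_m.+1 -> 'M[cpx]_n) tau lam (x : 'cV[cpx]_n) i :
  (Fmat A tau lam *m x)%R i ord0 =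
  (lam * x i ord0 - \sum_(k < m.+1) cf lam (tau k) * (A k *m x) i ord0)%R.
Proof.
rewrite /Fmat mulmxBl mul_scalar_mx mulmx_suml !mxE summxE; congr (_ - _)%R.
by apply: eq_bigr => k _; rewrite -scalemxAl mxE.
Qed.

Lemma wfun_ge m (tau w : 'I_m.+1 -> R) lam :
  tau ord0 = 0 -> (forall i, 0 < w i) -> / w ord0 <= wfun tau w lam.
Proof.
move=> t0 hw; rewrite /wfun.
apply: Rle_trans (@Rsum_term _ (fun i : 'I_m.+1 => Rdiv (Cmod (cf lam (tau i))) (w i)) ord0 _).
  rewrite /= Cmod_cf t0 Rmult_0_r Ropp_0 exp_0 /Rdiv Rmult_1_l; lra.
move=> k; apply: Rmult_le_pos; [exact: Cmod_ge0 | left; apply: Rinv_0_lt_compat; exact: hw].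
Qed.

Lemma wfun_le m (tau w : 'I_m.+1 -> R) lam :
  (forall i, 0 <= tau i) -> (forall i, 0 < w i) -> 0 <= Re lam ->
  wfun tau w lam <= \big[Rplus/R0]_(i < m.+1) / w i.
Proof.
move=> ht hw hs; rewrite /wfun; apply: Rsum_le => k _.
rewrite -[Cexp _]/(cf lam (tau k)) Cmod_cf /Rdiv -{2}(Rmult_1_l (/ w k)); apply: Rmult_le_compat_r.
  left; apply: Rinv_0_lt_compat; exact: hw.
rewrite -exp_0; apply: exp_le; have := ht k; nra.
Qed.

Lemma wfun_ge0 m (tau w : 'I_m.+1 -> R) lam :
  (forall i, 0 < w i) -> 0 <= wfun tau w lam.
Proof.
move=> hw; apply: Rsum_ge0 => k _; apply: Rmult_le_pos; first exact: Cmod_ge0.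
left; apply: Rinv_0_lt_compat; exact: hw.
Qed.

Lemma Fmat_unit n m (A : 'I_m.+1 -> 'M[cpx]_n) tau alpha0 lam :
  is_lub (root_re A tau) alpha0 -> alpha0 < Re lam -> Fmat A tau lam \in unitmx.
Proof.
move=> [ub _] hl; rewrite unitmxE unitfE; apply/negP => /eqP h.
have := ub (Re lam) (ex_intro _ lam (conj h erefl)); lra.
Qed.

Lemma ReD (a b : cpx) : Re (a + b)%R = Re a + Re b. Proof. by []. Qed.
Lemma ImD (a b : cpx) : Im (a + b)%R = Im a + Im b. Proof. by []. Qed.

Lemma cf_diff (lam1 : cpx) d t : 0 <= d -> 0 <= t ->
  Cmod (cf (lam1 + RtoC d) t - cf lam1 t)%R <= exp (- (Re lam1 * t)) * (d * t).
Proof.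
move=> hd ht.
have e : (cf (lam1 + RtoC d) t - cf lam1 t)%R =
   (RtoC (Rminus (exp (- (Re lam1 * t) + - (d * t))) (exp (- (Re lam1 * t)))) * Cexp (Cpx 0 (- (Im lam1 * t))))%R.
  apply: cpx_ext; rewrite /cf /Cexp !cf_Re !cf_Im ReD ImD /= /GRing.add /GRing.opp /GRing.mul /=.
  1-2: replace (- ((Re lam1 + d) * t)) with (- (Re lam1 * t) + - (d * t)) by ring.
  1-2: replace (- ((Im lam1 + 0) * t)) with (- (Im lam1 * t)) by ring.
  1-2: replace (exp 0) with 1 by (symmetry; exact: exp_0); ring.
rewrite e Cmod_mul Cmod_Cexp /= exp_0 Rmult_1_r Cmod_RtoC exp_plus.
have h1 := exp_ineq1_le (- (d * t)).
have h2 : exp (- (d * t)) <= 1 by rewrite -exp_0; apply: exp_le; nra.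
have h3 := exp_pos (- (Re lam1 * t)).
rewrite Rabs_left1; nra.
Qed.

Lemma mul_entry_bound2 n (M : 'M[cpx]_n) (x : 'cV[cpx]_n) c i :
  (forall j, Cmod (M i j) <= c) ->
  Cmod ((M *m x)%R i ord0) <= c * \big[Rplus/R0]_(j < n) Cmod (x j ord0).
Proof.
move=> h; rewrite mxE Rsum_mull.
apply: Rle_trans (Cmod_sum _ _ _) _; apply: Rsum_le => j _.
rewrite Cmod_mul; apply: Rmult_le_compat_r; [exact: Cmod_ge0 | exact: h].
Qed.

Definition Kc n (M : 'M[cpx]_n) := \big[Rplus/R0]_(i < n) \big[Rplus/R0]_(j < n) Cmod (M i j).

Lemma Kc_ge0 n (M : 'M[cpx]_n) : 0 <= Kc M.
Proof. apply: Rsum_ge0 => i _; apply: Rsum_ge0 => j _; exact: Cmod_ge0. Qed.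

Lemma Kc_entry n (M : 'M[cpx]_n) i j : Cmod (M i j) <= Kc M.
Proof.
apply: Rle_trans (@Rsum_term _ (fun j => Cmod (M i j)) j (fun k => Cmod_ge0 _)) _.
exact: (@Rsum_term _ (fun i => \big[Rplus/R0]_(j < n) Cmod (M i j)) i (fun k => Rsum_ge0 _ (fun j _ => Cmod_ge0 _))).
Qed.

Lemma inv_bound n m (A : 'I_m.+1 -> 'M[cpx]_n) tau alpha0 lam :
  (forall i, 0 <= tau i) -> is_lub (root_re A tau) alpha0 ->
  alpha0 < Re lam -> 0 <= Re lam ->
  INR n * \big[Rplus/R0]_(k < m.+1) Kc (A k) < Re lam ->
  forall y : 'cV[cpx]_n, vnorm y = 1 ->
  vnorm (invmx (Fmat A tau lam) *m y)%R <=
     INR n / (Re lam - INR n * \big[Rplus/R0]_(k < m.+1) Kc (A k)).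
Proof.
move=> ht hl ha hs hK y hy.
set K := \big[Rplus/R0]_(k < m.+1) Kc (A k) in hK *.
have U := Fmat_unit hl ha.
set x := (invmx (Fmat A tau lam) *m y)%R.
have Fx : (Fmat A tau lam *m x)%R = y by rewrite /x mulmxA mulmxV // mul1mx.
set S1 := \big[Rplus/R0]_(j < n) Cmod (x j ord0).
have S1_ge0 : 0 <= S1 by apply: Rsum_ge0 => j _; exact: Cmod_ge0.
have hi : forall i, Re lam * Cmod (x i ord0) <= 1 + K * S1.
  move=> i; have e := Fmat_mulE A tau lam x i; rewrite Fx in e.
  have e2 : (lam * x i ord0 = y i ord0 + \sum_(k < m.+1) cf lam (tau k) * (A k *m x)%R i ord0)%R.
    by rewrite e subrK.
  apply: Rle_trans (_ : Cmod (lam * x i ord0)%R <= _).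
    rewrite Cmod_mul; apply: Rmult_le_compat_r; [exact: Cmod_ge0 | exact: Cmod_Re].
  rewrite e2; apply: Rle_trans (Cmod_add _ _) _; apply: Rplus_le_compat.
    by have := entry_le y i; rewrite hy.
  apply: Rle_trans (Cmod_sum _ _ _) _.
  rewrite /K Rmult_comm Rsum_mull; apply: Rsum_le => k _.
  rewrite Cmod_mul Cmod_cf.
  apply: Rle_trans (_ : _ <= 1 * (Kc (A k) * S1)) _; last by rewrite Rmult_1_l Rmult_comm; lra.
  apply: Rmult_le_compat.
  - exact: Rlt_le (exp_pos _).
  - exact: Cmod_ge0.
  - rewrite -exp_0; apply: exp_le; have := ht k; nra.
  - apply: mul_entry_bound2 => j; exact: Kc_entry.
have hsum : Re lam * S1 <= INR n * (1 + K * S1).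
  rewrite /S1 Rsum_mull -Rsum_const; apply: Rsum_le => i _; exact: hi.
have hpos : 0 < Re lam - INR n * K by lra.
apply: Rle_trans (vnorm_le_sum x) _; rewrite -/S1.
apply: (Rmult_le_reg_r (Re lam - INR n * K)) => //.
rewrite /Rdiv Rmult_assoc Rinv_l; lra.
Qed.

Lemma ker_exists n (M : 'M[cpx]_n) : (\det M = 0)%R ->
  exists v : 'cV[cpx]_n, vnorm v = 1 /\ (M *m v = 0)%R.
Proof.
move=> h.
have /det0P [r rnz hr] : (\det M^T == 0)%R by rewrite det_tr h.
have hv : (M *m (r^T)%R = 0)%R by have := congr1 trmx hr; rewrite trmx_mul trmxK trmx0.
have nz : (r^T)%R != 0%R by rewrite -(inj_eq (@trmx_inj _ _ _)) trmxK trmx0.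
exists (RtoC (/ vnorm (r^T)%R) *: (r^T)%R)%R; split; first exact: normalize.
by rewrite -scalemxAr hv scaler0.
Qed.

Lemma alg_id (a b c p q : cpx) : ((a + b) * c - (p + q) = (b * c - p) + (a * c - q))%R.
Proof. by rewrite mulrDl (addrC (a * c)%R) opprD addrACA. Qed.

Definition Gc n m (A : 'I_m.+1 -> 'M[cpx]_n) (tau : 'I_m.+1 -> R) alpha0 :=
  1 + \big[Rplus/R0]_(k < m.+1) (exp ((1 - alpha0) * tau k) * tau k * Kc (A k)).

Lemma Gc_pos n m (A : 'I_m.+1 -> 'M[cpx]_n) tau alpha0 :
  (forall i, 0 <= tau i) -> 0 < Gc A tau alpha0.
Proof.
move=> ht; rewrite /Gc.
have : 0 <= \big[Rplus/R0]_(k < m.+1) (exp ((1 - alpha0) * tau k) * tau k * Kc (A k)).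
  apply: Rsum_ge0 => k _; apply: Rmult_le_pos; last exact: Kc_ge0.
  apply: Rmult_le_pos; [exact: Rlt_le (exp_pos _) | exact: ht].
lra.
Qed.

Lemma near_root n m (A : 'I_m.+1 -> 'M[cpx]_n) tau alpha0 lam1 (v : 'cV[cpx]_n) d :
  (forall i, 0 <= tau i) -> vnorm v = 1 -> (Fmat A tau lam1 *m v = 0)%R ->
  alpha0 - 1 <= Re lam1 -> 0 <= d ->
  forall i, Cmod ((Fmat A tau (lam1 + RtoC d) *m v)%R i ord0) <= d * Gc A tau alpha0.
Proof.
move=> ht hv h0 hr hd i.
have e0 := Fmat_mulE A tau lam1 v i; rewrite h0 mxE in e0.
rewrite Fmat_mulE.
have -> : (\sum_(k < m.+1) cf (lam1 + RtoC d) (tau k) * (A k *m v)%R i ord0 =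
   \sum_(k < m.+1) (cf (lam1 + RtoC d) (tau k) - cf lam1 (tau k)) * (A k *m v)%R i ord0 +
   \sum_(k < m.+1) cf lam1 (tau k) * (A k *m v)%R i ord0)%R.
  rewrite -big_split; apply: eq_bigr => k _ /=. rewrite mulrBl. by rewrite addrNK.
rewrite alg_id -e0 addr0.
apply: Rle_trans (Cmod_add _ _) _; rewrite Cmod_opp Cmod_mul Cmod_RtoC Rabs_right; last lra.
rewrite /Gc Rmult_plus_distr_l Rmult_1_r; apply: Rplus_le_compat.
  have := entry_le v i; rewrite hv => h1; have := Cmod_ge0 (v i ord0); nra.
apply: Rle_trans (Cmod_sum _ _ _) _.
rewrite Rsum_mull; apply: Rsum_le => k _.
rewrite Cmod_mul.
have hk := ht k.
apply: Rle_trans (_ : _ <= (exp (- (Re lam1 * tau k)) * (d * tau k)) * (1 * Kc (A k))) _.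
  apply: Rmult_le_compat; [exact: Cmod_ge0 | exact: Cmod_ge0 | exact: cf_diff |].
  apply: Rle_trans (mul_entry_bound (b := 1) _ _ _) _.
    by move=> j; have := entry_le v j; rewrite hv.
  apply: Rmult_le_compat_l; first lra.
  exact: (@Rsum_term _ (fun i => \big[Rplus/R0]_(j < n) Cmod (A k i j)) i (fun _ => Rsum_ge0 _ (fun j _ => Cmod_ge0 _))).
have : exp (- (Re lam1 * tau k)) <= exp ((1 - alpha0) * tau k) by apply: exp_le; nra.
move=> hE; rewrite Rmult_1_l.
have hp : 0 <= d * tau k * Kc (A k) by apply: Rmult_le_pos; [nra | exact: Kc_ge0].
have := Rmult_le_compat_r _ _ _ hp hE.
move: (exp (- (Re lam1 * tau k))) (exp ((1 - alpha0) * tau k)) (Kc (A k)) => a b c h.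
nra.
Qed.

Lemma vnorm0 n : vnorm (0 : 'cV[cpx]_n)%R = 0.
Proof.
rewrite vnormE /nsq big1 ?sqrt_0 // => i _.
rewrite mxE /Cmod /= Rmult_0_l Rplus_0_l sqrt_0; ring.
Qed.

Theorem proposition2 (n m : nat) (A : 'I_m.+1 -> 'M[cpx]_n) (tau w : 'I_m.+1 -> R)
    (alpha0 : R) :
  (0 < n)%N ->
  tau ord0 = 0 ->
  (forall i, 0 <= tau i) ->
  (forall i, 0 < w i) ->
  is_lub (root_re A tau) alpha0 ->
  (forall M : R, exists delta : R, 0 < delta /\
     forall s : R, alpha0 < s < alpha0 + delta ->
       exists y, fvals A tau w s y /\ M < y)
  /\
  (forall eps : R, 0 < eps -> exists S : R,
     forall s : R, S < s ->
       exists u : R, is_lub (fvals A tau w s) u /\ Rabs u < eps).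
Proof.
move=> n0 t0 ht hw hl.
have nR : 0 < INR n by apply: lt_0_INR; apply/ltP.
split.
- move=> M.
  set G := Gc A tau alpha0.
  have G0 : 0 < G := Gc_pos A alpha0 ht.
  have w0 := hw ord0.
  have sn : 0 < sqrt (INR n) by apply: sqrt_lt_R0.
  set P := w ord0 * sqrt (INR n) * G.
  have P0 : 0 < P by rewrite /P; apply: Rmult_lt_0_compat => //; apply: Rmult_lt_0_compat.
  have M0 : 0 < Rabs M + 1 by have := Rabs_pos M; lra.
  set eta := / (P * (Rabs M + 1)).
  have eta0 : 0 < eta by apply: Rinv_0_lt_compat; apply: Rmult_lt_0_compat.
  set del := Rmin 1 (eta / 2).
  have del0 : 0 < del by apply: Rmin_pos; lra.
  have del1 : del <= 1 by apply: Rmin_l.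
  have del2 : del <= eta / 2 by apply: Rmin_r.
  have [lam1 [hr1 hre1]] : exists lam1, char_root A tau lam1 /\ alpha0 - del < Re lam1.
    apply: NNPP => hn.
    have : alpha0 <= alpha0 - del; last lra.
    apply: (proj2 hl) => x [lam [hc ->]].
    apply: Rnot_lt_le => hlt; apply: hn; by exists lam.
  have hle1 : Re lam1 <= alpha0 by apply: (proj1 hl); exists lam1.
  have [v [hv hFv]] := ker_exists hr1.
  exists del; split => // s [hs1 hs2].
  set d := s - Re lam1.
  have d0 : 0 < d by rewrite /d; lra.
  have deta : d < eta by rewrite /d; lra.
  have elam : (lam1 + RtoC d)%R = sjw s (Im lam1).
    by apply: cpx_ext => /=; rewrite /d; ring.
  exists (ffun A tau w (sjw s (Im lam1))); split; first by exists (Im lam1).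
  rewrite -elam /ffun.
  set lam := (lam1 + RtoC d)%R.
  have U : Fmat A tau lam \in unitmx.
    apply: (Fmat_unit hl); rewrite /lam ReD /=; rewrite /d; lra.
  set u := (Fmat A tau lam *m v)%R.
  have unz : u != 0%R.
    apply/eqP => h0.
    have : v = 0%R by rewrite -(mulKmx U v) -/u h0 mulmx0.
    move=> hv0; move: hv; rewrite hv0 vnorm0; lra.
  set r := vnorm u.
  have r0 : 0 < r := vnorm_pos unz.
  have rle : r <= sqrt (INR n) * (d * G).
    rewrite /r vnormE -(sqrt_square (d * G)); last by apply: Rmult_le_pos; lra.
    rewrite -sqrt_mult; [|lra|nra].
    apply: sqrt_le_1_alt; apply: nsq_bound => i.
    apply: near_root => //; rewrite ?hv //; lra.
  have hz := normalize unz.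
  have hsig : / r <= sigma_max (invmx (Fmat A tau lam)).
    have := sig_ge (invmx (Fmat A tau lam)) n0 hz.
    rewrite -scalemxAr mulKmx // vnorm_scale hv Cmod_RtoC Rabs_right; last first.
      by left; apply: Rinv_0_lt_compat.
    by rewrite Rmult_1_r.
  have hwf := wfun_ge lam t0 hw.
  apply: Rlt_le_trans (_ : M < / w ord0 * / r) _; last first.
    apply: Rmult_le_compat => //.
    + by left; apply: Rinv_0_lt_compat.
    + by left; apply: Rinv_0_lt_compat.
  rewrite -Rinv_mult.
  have h1 : w ord0 * r < / (Rabs M + 1).
    apply: Rle_lt_trans (_ : w ord0 * r <= P * d) _.
      rewrite /P; have := Rmult_le_compat_l _ _ _ (Rlt_le _ _ w0) rle; lra.
    apply: Rlt_le_trans (_ : P * d < P * eta) _.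
      exact: Rmult_lt_compat_l.
    rewrite /eta; right; field; lra.
  have := Rinv_lt_contravar _ _ (Rmult_lt_0_compat _ _ (Rmult_lt_0_compat _ _ w0 r0) (Rinv_0_lt_compat _ M0)) h1.
  rewrite Rinv_inv; have := Rle_abs M; lra.
- move=> eps e0.
  set K := \big[Rplus/R0]_(k < m.+1) Kc (A k).
  set W := \big[Rplus/R0]_(i < m.+1) / w i.
  have W0 : 0 <= W by apply: Rsum_ge0 => i _; left; apply: Rinv_0_lt_compat.
  exists (Rmax (Rmax alpha0 0) (INR n * K + INR n * W / eps)) => s hs.
  have hs1 := Rle_lt_trans _ _ _ (Rmax_l _ _) hs.
  have hs2 := Rle_lt_trans _ _ _ (Rmax_r _ _) hs.
  have hsa := Rle_lt_trans _ _ _ (Rmax_l _ _) hs1.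
  have hs0 := Rle_lt_trans _ _ _ (Rmax_r _ _) hs1.
  have hnw : 0 <= INR n * W / eps.
    apply: Rmult_le_pos; [nra | left; exact: Rinv_0_lt_compat].
  set B := W * (INR n / (s - INR n * K)).
  have hB : forall om, ffun A tau w (sjw s om) <= B.
    move=> om; rewrite /ffun /B; apply: Rmult_le_compat.
    + exact: wfun_ge0.
    + exact: sig_ge0.
    + apply: wfun_le => //=; lra.
    + apply: sig_le => // x hx; apply: (@inv_bound _ _ A tau alpha0) => //=; rewrite -/K; lra.
  have hne : exists y, fvals A tau w s y by exists (ffun A tau w (sjw s 0)), 0.
  have hbd : bound (fvals A tau w s) by exists B => y [om ->]; exact: hB.
  have [u hu] := completeness _ hbd hne.
  exists u; split => //.
  have ge : 0 <= u.
    apply: Rle_trans (proj1 hu _ (ex_intro _ 0 erefl)).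
    apply: Rmult_le_pos; [exact: wfun_ge0 | exact: sig_ge0].
  have le : u <= B by apply: (proj2 hu) => y [om ->]; exact: hB.
  have Blt : B < eps.
    have hp : 0 < s - INR n * K by lra.
    have : INR n * W < eps * (s - INR n * K).
      have : INR n * W / eps * eps = INR n * W by field; lra.
      nra.
    rewrite /B => h.
    apply: (Rmult_lt_reg_r (s - INR n * K)) => //.
    have -> : W * (INR n / (s - INR n * K)) * (s - INR n * K) = INR n * W by field; lra.
    lra.
  rewrite Rabs_right; lra.
Qed.
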